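(* Let $G$ be a finitely generated group with solvable word problem, and let $B$ be a left-free $G$-$G$-biset with finite basis $X$ whose structure map $X\times G\to G\times X$ is computable. Then there is an algorithm which terminates if and only if $B$ is contracting, and in that case returns the nucleus $N(B,X)$ (otherwise it runs forever).
   Context: A $G$-$G$-biset is a set with commuting left and right $G$-actions; it is left-free if the left action is free, and a basis $X$ is a set of representatives of the left orbits, so every $xg$ ($x\in X,g\in G$) is uniquely written $hy$ with $h\in G,y\in X$. Tensor powers: $B\otimes_G B=(B\times B)/(bg,c)\sim(b,gc)$, with basis $X^n$. $B$ is contracting if there is a finite $N\subseteq G$ such that for every $g\in G$ and all sufficiently large $n$, $X^{\otimes n}g\subseteq NX^{\otimes n}$; the nucleus $N(B,X)$ is the minimal such $N$. *)

(* Defs.v *)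
(* Groups: [groupType] from mathcomp/boot/monoid.v
   (possibly infinite groups; the carrier is a choiceType, hence has a
   decidable equality). *)
From HB Require Import structures.
From mathcomp Require Import all_boot.
From mathcomp Require Import monoid.

Set Implicit Arguments.
Unset Strict Implicit.
Unset Printing Implicit Defensive.

Local Open Scope group_scope.

Definition generates (G : groupType) (gens : seq G) : Prop :=
  forall g : G, exists s : seq G,
    all (fun a => (a \in gens) || (a^-1 \in gens)) s /\ g = foldr mul 1 s.

(* A left-free G-G-biset B with basis X is (up to isomorphism)          *)
(* B = G x X, with left action  h.(g,x) = (hg,x)  and right action     *)
(* given by the structure map sigma : X x G -> G x X,                  *)
(*     x g = h y   <=>   sigma x g = (h, y).                           *)
(* [biset_structure sigma] says that this is a right action (it then   *)
(* automatically commutes with the free left action).                  *)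
Definition biset_structure (G : groupType) (X : finType)
    (sigma : X -> G -> G * X) : Prop :=
  (forall x : X, sigma x 1 = (1, x)) /\
  (forall (x : X) (g h : G),
      sigma x (g * h) =
      let (g1, y) := sigma x g in
      let (h1, z) := sigma y h in (g1 * h1, z)).

(* Right action of G on the basis X^n of the tensor power B^{(x)n}:    *)
(* for v = x1 (x) ... (x) xn (the list [:: x1; ...; xn]) and g in G,    *)
(* [bact sigma v g = (h, w)] means  v g = h w  in B^{(x)n}.            *)
Fixpoint bact (G : groupType) (X : finType) (sigma : X -> G -> G * X)
    (v : seq X) (g : G) : G * seq X :=
  match v with
  | [::] => (g, [::])
  | x :: v' =>
      let (h, w) := bact sigma v' g in
      let (h', x') := sigma x h in (h', x' :: w)
  end.

Definition contracting_set (G : groupType) (X : finType)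
    (sigma : X -> G -> G * X) (N : seq G) : Prop :=
  forall g : G, exists m : nat, forall n : nat, m <= n ->
    forall v : seq X, size v = n -> (bact sigma v g).1 \in N.

Definition contracting (G : groupType) (X : finType)
    (sigma : X -> G -> G * X) : Prop :=
  exists N : seq G, contracting_set sigma N.

Definition is_nucleus (G : groupType) (X : finType)
    (sigma : X -> G -> G * X) (N : seq G) : Prop :=
  contracting_set sigma N /\
  forall N' : seq G, contracting_set sigma N' -> {subset N <= N'}.

(* The algorithm.  It only uses: equality test in G (solvable word     *)
(* problem), the group operations, the finite generating set, the      *)
(* finite basis X and the structure map sigma.  [nucleus_alg .. l] is  *)
(* the state of the algorithm after l stages: [None] = still running,  *)
(* [Some N] = halted with output N.                                    *)

Fixpoint words (X : finType) (n : nat) : seq (seq X) :=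
  if n is n'.+1 then [seq x :: w | x <- enum X, w <- words X n'] else [:: [::]].

Fixpoint prods (G : groupType) (A : seq G) (l : nat) : seq G :=
  if l is l'.+1 then undup (1 :: [seq a * b | a <- A, b <- prods A l'])
  else [:: 1].

Fixpoint subseqs (T : Type) (s : seq T) : seq (seq T) :=
  match s with
  | [::] => [:: [::]]
  | x :: s' => let r := subseqs s' in r ++ map (cons x) r
  end.

Definition letters (G : groupType) (gens : seq G) : seq G :=
  gens ++ map inv gens.

Definition valid_cert (G : groupType) (gens : seq G) (X : finType)
    (sigma : X -> G -> G * X) (M : seq G) (k : nat) : bool :=
  [&& all (fun a => a \in M) (1 :: letters gens),
      all (fun a => all (fun x => (sigma x a).1 \in M) (enum X)) M &
      all (fun a => all (fun b =>
             all (fun v => (bact sigma v (a * b)).1 \in M) (words X k)) M) M].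

Definition prune (G : groupType) (X : finType) (sigma : X -> G -> G * X)
    (C : seq G) : seq G :=
  [seq c <- C | has (fun d => has (fun x => (sigma x d).1 == c) (enum X)) C].

Definition core (G : groupType) (X : finType) (sigma : X -> G -> G * X)
    (M : seq G) : seq G :=
  iter (size M) (prune sigma) M.

Definition candidates (G : groupType) (gens : seq G) (l : nat)
    : seq (seq G * nat) :=
  [seq (M, k) | M <- subseqs (prods (letters gens) l), k <- iota 0 l.+1].

Definition nucleus_alg (G : groupType) (gens : seq G) (X : finType)
    (sigma : X -> G -> G * X) (l : nat) : option (seq G) :=
  match [seq p <- candidates gens l | valid_cert gens sigma p.1 p.2] with
  | [::] => None
  | p :: _ => Some (core sigma p.1)
  end.

(* Main.v *)
Require Import Defs.
From HB Require Import structures.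
From mathcomp Require Import all_boot.
From mathcomp Require Import monoid.
From mathcomp Require Import zify.
From Stdlib Require Import Lia ClassicalEpsilon.
Set Implicit Arguments.
Unset Strict Implicit.
Unset Printing Implicit Defensive.
Local Open Scope group_scope.

Definition res (G : groupType) (X : finType) (sigma : X -> G -> G * X)
  (v : seq X) (g : G) : G := (bact sigma v g).1.

Lemma bact_cat (G : groupType) (X : finType) (sigma : X -> G -> G * X) u w g :
  bact sigma (u ++ w) g =
  ((bact sigma u (bact sigma w g).1).1,
   (bact sigma u (bact sigma w g).1).2 ++ (bact sigma w g).2).
Proof.
elim: u => [|x u IH] /=; first by case: (bact sigma w g).
rewrite IH /=. case: (bact sigma u _) => h w' /=. by case: (sigma x h).
Qed.

Lemma res_cat (G : groupType) (X : finType) (sigma : X -> G -> G * X) u w g :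
  res sigma (u ++ w) g = res sigma u (res sigma w g).
Proof. by rewrite /res bact_cat. Qed.

Lemma size_bact (G : groupType) (X : finType) (sigma : X -> G -> G * X) v g :
  size (bact sigma v g).2 = size v.
Proof.
elim: v => [|x v IH] //=. move: IH; case: (bact sigma v g) => h w /= IH.
by case: (sigma x h) => ? ? /=; rewrite IH.
Qed.

Lemma res1 (G : groupType) (X : finType) (sigma : X -> G -> G * X) x g :
  res sigma [:: x] g = (sigma x g).1.
Proof. by rewrite /res /=; case: (sigma x g). Qed.

Lemma res_cons (G : groupType) (X : finType) (sigma : X -> G -> G * X) x v g :
  res sigma (x :: v) g = (sigma x (res sigma v g)).1.
Proof. by rewrite -cat1s res_cat res1. Qed.

Lemma bact_mul (G : groupType) (X : finType) (sigma : X -> G -> G * X) v a b :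
  biset_structure sigma ->
  bact sigma v (a * b) =
  ((bact sigma v a).1 * (bact sigma (bact sigma v a).2 b).1,
   (bact sigma (bact sigma v a).2 b).2).
Proof.
move=> [_ Hm]; elim: v => [|x v IH] //=.
rewrite IH; case: (bact sigma v a) => h w /=.
rewrite Hm. case: (sigma x h) => g1 y /=.
case: (bact sigma w b) => h2 w2 /=. by case: (sigma y h2).
Qed.

Lemma res_mul (G : groupType) (X : finType) (sigma : X -> G -> G * X) v a b :
  biset_structure sigma ->
  res sigma v (a * b) = res sigma v a * res sigma (bact sigma v a).2 b.
Proof. by move=> H; rewrite /res bact_mul. Qed.

Lemma bact1 (G : groupType) (X : finType) (sigma : X -> G -> G * X) v :
  biset_structure sigma -> bact sigma v 1 = (1, v).
Proof. move=> [H1 _]; elim: v => [|x v IH] //=; by rewrite IH H1. Qed.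

Lemma words_size (X : finType) n v : v \in words X n -> size v = n.
Proof.
elim: n v => [|n IH] v /=; first by rewrite inE => /eqP ->.
case/allpairsPdep => x [w [_ Hw ->]] /=. by rewrite (IH _ Hw).
Qed.

Lemma words_mem (X : finType) v : v \in words X (size v).
Proof.
elim: v => [|x v IH] /=; first by rewrite inE.
apply: (allpairs_f_dep (fun x w => x :: w)) => //. by rewrite mem_enum.
Qed.

Definition rclosed (G : groupType) (X : finType) (sigma : X -> G -> G * X)
  (M : seq G) := forall a x, a \in M -> (sigma x a).1 \in M.

Lemma res_closed (G : groupType) (X : finType) (sigma : X -> G -> G * X) M v a :
  rclosed sigma M -> a \in M -> res sigma v a \in M.
Proof. move=> HM Ha; elim: v => [|x v IH] //; rewrite res_cons; exact: HM. Qed.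

Lemma foldr_mul_cat (G : groupType) (t1 t2 : seq G) :
  foldr mul 1 (t1 ++ t2) = foldr mul 1 t1 * foldr mul 1 t2.
Proof. elim: t1 => [|a t IH] /=; by rewrite ?mul1g // IH mulgA. Qed.

Lemma step_lemma (G : groupType) (X : finType) (sigma : X -> G -> G * X) M k n a b :
  biset_structure sigma -> rclosed sigma M ->
  (forall a b v, a \in M -> b \in M -> size v = k -> res sigma v (a * b) \in M) ->
  (forall v, n <= size v -> res sigma v a \in M) ->
  (forall v, n <= size v -> res sigma v b \in M) ->
  forall v, n + k <= size v -> res sigma v (a * b) \in M.
Proof.
move=> Hb Hc Hk Ha Hbb v Hv.
rewrite -(cat_take_drop (size v - n) v) res_cat res_mul //.
set u := take _ v; set w := drop _ v.
have Sw : size w = n by rewrite size_drop; lia.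
have Su : k <= size u by rewrite size_take; case: ifP; lia.
have r1 : res sigma w a \in M by apply: Ha; rewrite Sw.
have r2 : res sigma (bact sigma w a).2 b \in M by apply: Hbb; rewrite size_bact Sw.
rewrite -(cat_take_drop (size u - k) u) res_cat.
apply: res_closed => //; apply: Hk => //; rewrite size_drop; lia.
Qed.

Lemma pow_lemma (G : groupType) (X : finType) (sigma : X -> G -> G * X) M k :
  biset_structure sigma -> rclosed sigma M -> 1 \in M ->
  (forall a b v, a \in M -> b \in M -> size v = k -> res sigma v (a * b) \in M) ->
  forall j (t : seq G), all (fun a => a \in M) t -> size t <= 2 ^ j ->
  forall v, (j * k)%N <= size v -> res sigma v (foldr mul 1 t) \in M.
Proof.
move=> Hb Hc H1 Hk; elim=> [|j IH] t Ht Hs v Hv.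
  case: t Ht Hs => [|a [|c t]] //=; first by move=> _ _; apply: res_closed.
  by rewrite mulg1 andbT => Ha _; apply: res_closed.
rewrite -(cat_take_drop (2 ^ j) t) foldr_mul_cat.
have Ht' := Ht; rewrite -(cat_take_drop (2 ^ j) t) all_cat in Ht'.
case/andP: Ht' => Ht1 Ht2.
apply: (step_lemma (k := k) (n := (j * k)%N)) => //.
- move=> w Hw; apply: (IH _ Ht1) => //; rewrite size_take; case: ifP; lia.
- move=> w Hw; apply: (IH _ Ht2) => //; rewrite size_drop; rewrite expnS in Hs; lia.
- by rewrite mulSn addnC in Hv.
Qed.

Lemma cert_contracting (G : groupType) (gens : seq G) (X : finType)
    (sigma : X -> G -> G * X) M k :
  generates gens -> biset_structure sigma -> valid_cert gens sigma M k ->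
  rclosed sigma M /\ contracting_set sigma M.
Proof.
move=> Hg Hb /and3P [/allP Hl /allP Hcl /allP Hpr].
have Hc : rclosed sigma M.
  by move=> a x Ha; move/allP: (Hcl a Ha); apply; rewrite mem_enum.
have H1 : 1 \in M by apply: Hl; rewrite inE eqxx.
have Hk : forall a b v, a \in M -> b \in M -> size v = k -> res sigma v (a * b) \in M.
  move=> a b v Ha Hbm Sv. move/allP: (Hpr a Ha) => /(_ b Hbm) /allP; apply.
  by rewrite -Sv words_mem.
split => // g.
case: (Hg g) => s [Hs ->].
exists (size s * k)%N => n Hn v Sv.
apply: (pow_lemma (j := size s) (t := s) Hb Hc H1 Hk).
- apply/allP => a /(allP Hs) Ha; apply: Hl; rewrite inE /letters mem_cat.
  case/orP: Ha => [->|Ha]; first by rewrite orbT.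
  apply/orP; right; apply/orP; right.
  by rewrite -(invgK a) map_f.
- apply: ltnW; exact: ltn_expl.
- by rewrite Sv.
Qed.

Lemma list_bound (T : eqType) (P : T -> nat -> Prop) (s : seq T) :
  (forall t, t \in s -> exists m, forall n, m <= n -> P t n) ->
  exists m, forall t, t \in s -> forall n, m <= n -> P t n.
Proof.
elim: s => [|a s IH] H; first by exists 0.
case: (H a (mem_head _ _)) => ma Ha.
case: IH => [t Ht|ms Hs]; first by apply: H; rewrite inE Ht orbT.
exists (maxn ma ms) => t; rewrite inE => /orP [/eqP->|Ht] n Hn.
  by apply: Ha; lia.
by apply: Hs => //; lia.
Qed.

Lemma prune_sub (G : groupType) (X : finType) (sigma : X -> G -> G * X) C c :
  c \in prune sigma C -> c \in C.
Proof. by rewrite mem_filter => /andP []. Qed.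

Lemma prune_step (G : groupType) (X : finType) (sigma : X -> G -> G * X) C :
  prune sigma C = C \/ size (prune sigma C) < size C.
Proof.
rewrite /prune size_filter.
case: (boolP (all (fun c => has (fun d => has (fun x => (sigma x d).1 == c) (enum X)) C) C)) => Ha.
  by left; apply/all_filterP.
right; rewrite ltn_neqAle count_size andbT; apply/negP => /eqP E.
by move/negP: Ha; apply; rewrite all_count E.
Qed.

Lemma iter_prune_fix (G : groupType) (X : finType) (sigma : X -> G -> G * X) M :
  forall i, prune sigma (iter i (prune sigma) M) = iter i (prune sigma) M \/
            size (iter i (prune sigma) M) + i <= size M.
Proof.
elim=> [|i IH]; first by right; rewrite addn0.
case: IH => [E|Hs] /=; first by left; rewrite E E.
case: (prune_step sigma (iter i (prune sigma) M)) => [E|Hl].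
  by left; rewrite E E.
by right; lia.
Qed.

Lemma core_fix (G : groupType) (X : finType) (sigma : X -> G -> G * X) M c :
  c \in core sigma M ->
  exists d x, d \in core sigma M /\ (sigma x d).1 = c.
Proof.
have E : prune sigma (core sigma M) = core sigma M.
  case: (iter_prune_fix sigma M (size M)) => // Hs.
  have : size (core sigma M) = 0 by rewrite /core; lia.
  by move/size0nil => ->.
rewrite -{1}E mem_filter => /andP [/hasP [d Hd /hasP [x _ /eqP Hx]] _].
by exists d, x.
Qed.

Lemma core_sub (G : groupType) (X : finType) (sigma : X -> G -> G * X) M c :
  c \in core sigma M -> c \in M.
Proof.
rewrite /core; elim: (size M) c => [|i IH] c //= /prune_sub; exact: IH.
Qed.

Lemma core_paths (G : groupType) (X : finType) (sigma : X -> G -> G * X) M :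
  rclosed sigma M ->
  forall i d v, d \in M -> size v = i -> res sigma v d \in iter i (prune sigma) M.
Proof.
move=> Hc; elim=> [|i IH] d v Hd Sv.
  by case: v Sv => //; rewrite /res.
rewrite /= mem_filter; apply/andP; split; last first.
  rewrite -(cat_take_drop i v) res_cat; apply: IH.
    by apply: res_closed.
  by rewrite size_take Sv ltnSn.
case: v Sv => // x v [Sv]; rewrite res_cons.
apply/hasP; exists (res sigma v d); first exact: IH.
by apply/hasP; exists x; rewrite ?mem_enum.
Qed.

Lemma core_nucleus (G : groupType) (X : finType) (sigma : X -> G -> G * X) M :
  rclosed sigma M -> contracting_set sigma M -> is_nucleus sigma (core sigma M).
Proof.
move=> Hc HM; split.
  move=> g; case: (HM g) => m Hm; exists (m + size M) => n Hn v Sv.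
  rewrite -(cat_take_drop (size M) v).
  have -> : (bact sigma (take (size M) v ++ drop (size M) v) g).1 =
    res sigma (take (size M) v) (res sigma (drop (size M) v) g) by rewrite -res_cat.
  apply: core_paths => //.
    apply: Hm (size (drop (size M) v)) _ _ _ => //; rewrite size_drop; lia.
  rewrite size_take; case: ifP; lia.
move=> N' HN' c Hc0.
have Hpath : forall n c, c \in core sigma M ->
    exists d v, [/\ d \in core sigma M, size v = n & res sigma v d = c].
  elim=> [|n IH] c' Hc'; first by exists c', [::].
  case: (core_fix Hc') => d [x [Hd Hx]].
  case: (IH d Hd) => d' [v [Hd' Sv Hv]].
  by exists d', (x :: v); split => //=; rewrite ?Sv // res_cons Hv.
have [m Hm] : exists m, forall t, t \in core sigma M -> forall n, m <= n ->
    forall v, size v = n -> res sigma v t \in N'.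
  apply: list_bound => t _; case: (HN' t) => m Hm; exists m => n Hn v Sv.
  exact: Hm Hn v Sv.
case: (Hpath m c Hc0) => d [v [Hd Sv <-]].
exact: Hm Hd m (leqnn m) v Sv.
Qed.

Lemma prodsS (G : groupType) (A : seq G) l :
  prods A l.+1 = undup (1 :: [seq a * b | a <- A, b <- prods A l]).
Proof. by []. Qed.

Lemma prods1 (G : groupType) (A : seq G) l : 1 \in prods A l.
Proof. case: l => [|l]; first by rewrite mem_seq1. by rewrite prodsS mem_undup mem_head. Qed.

Lemma prodsM (G : groupType) (A : seq G) l a b :
  a \in A -> b \in prods A l -> a * b \in prods A l.+1.
Proof.
move=> Ha Hb; rewrite prodsS mem_undup inE; apply/orP; right.
exact: (allpairs_f_dep (fun a b => a * b)).
Qed.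

Lemma prods_mono (G : groupType) (A : seq G) l b :
  b \in prods A l -> b \in prods A l.+1.
Proof.
elim: l b => [|l IH] b.
  by rewrite mem_seq1 => /eqP ->; exact: prods1.
rewrite prodsS mem_undup inE => /orP [/eqP ->|]; first exact: prods1.
case/allpairsPdep => a [c [Ha Hc ->]]; apply: prodsM => //; exact: IH.
Qed.

Lemma prods_mono_le (G : groupType) (A : seq G) l l' b :
  l <= l' -> b \in prods A l -> b \in prods A l'.
Proof.
move=> /subnK <-; elim: (l' - l) => [|d IH] //= Hb.
by apply: prods_mono; exact: IH.
Qed.

Lemma prods_foldr (G : groupType) (A : seq G) s :
  all (fun a => a \in A) s -> foldr mul 1 s \in prods A (size s).
Proof.
elim: s => [|a s IH] /=; first by rewrite inE.
case/andP => Ha Hs; apply: prodsM => //; exact: IH.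
Qed.

Lemma filter_subseqs (T : eqType) (p : pred T) (s : seq T) :
  filter p s \in subseqs s.
Proof.
elim: s => [|x s IH] /=; first by rewrite mem_seq1.
rewrite mem_cat; case: (p x); last by rewrite IH.
by rewrite map_f ?orbT.
Qed.

Definition pb (P : Prop) : bool := if excluded_middle_informative P then true else false.
Lemma pbP (P : Prop) : reflect P (pb P).
Proof. rewrite /pb; case: excluded_middle_informative => H; by constructor. Qed.

Lemma contracting_cert (G : groupType) (gens : seq G) (X : finType)
    (sigma : X -> G -> G * X) :
  generates gens -> biset_structure sigma -> contracting sigma ->
  exists l M k, (M, k) \in candidates gens l /\ valid_cert gens sigma M k.
Proof.
move=> Hg Hb [N HN].
set S := N ++ 1 :: letters gens.
have [m Hm] : exists m, forall s, s \in S -> forall n, m <= n ->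
    forall v, size v = n -> res sigma v s \in N.
  apply: list_bound => s _; case: (HN s) => m Hm; exists m => n Hn v Sv.
  exact: Hm Hn v Sv.
set L := N ++ [seq res sigma v s | s <- S, v <- flatten [seq words X i | i <- iota 0 m]].
have HL : forall s v, s \in S -> res sigma v s \in L.
  move=> s v Hs; rewrite mem_cat; case: (leqP m (size v)) => Hv.
    by rewrite (Hm s Hs (size v) Hv v).
  apply/orP; right; apply: (allpairs_f_dep (fun s v => res sigma v s)) => //.
  apply/flattenP; exists (words X (size v)); last exact: words_mem.
  by apply: map_f; rewrite mem_iota.
set M0 := [seq h <- L | pb (exists s v, s \in S /\ h = res sigma v s)].
have HM0 : forall h, h \in M0 <-> exists s v, s \in S /\ h = res sigma v s.
  move=> h; rewrite mem_filter; split; first by case/andP => /pbP.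
  move=> H; apply/andP; split; first by apply/pbP.
  by case: H => s [v [Hs ->]]; apply: HL.
have HS : forall s v, s \in S -> res sigma v s \in M0.
  by move=> s v Hs; apply/HM0; exists s, v.
have Hc : rclosed sigma M0.
  move=> a x /HM0 [s [v [Hs ->]]]; rewrite -res_cons; exact: HS.
have HNM : forall h, h \in N -> h \in M0.
  by move=> h Hh; apply: (HS h [::]); rewrite mem_cat Hh.
have [k Hk] : exists k, forall t, t \in [seq a * b | a <- M0, b <- M0] ->
    forall n, k <= n -> forall v, size v = n -> res sigma v t \in N.
  apply: list_bound => s _; case: (HN s) => k Hk; exists k => n Hn v Sv.
  exact: Hk Hn v Sv.
have [l Hl] : exists l, forall g, g \in M0 -> forall n, l <= n ->
    g \in prods (letters gens) n.
  apply: list_bound => g _; case: (Hg g) => s [Hs ->]; exists (size s) => n Hn.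
  apply: (prods_mono_le Hn); apply: prods_foldr.
  apply/allP => a /(allP Hs) /orP [Ha|Ha]; rewrite /letters mem_cat ?Ha //.
  by rewrite -(invgK a) map_f ?orbT.
set l' := maxn l k.
set M' := [seq g <- prods (letters gens) l' | g \in M0].
have HM' : forall g, (g \in M') = (g \in M0).
  move=> g; rewrite mem_filter; case: (boolP (g \in M0)) => //= H.
  by apply: Hl => //; rewrite leq_maxl.
exists l', M', k; split.
  rewrite /candidates; apply/allpairsP; exists (M', k); split => //=.
    exact: filter_subseqs.
  have Hki : k \in iota 0 l'.+1 by rewrite mem_iota /l'; lia.
  exact: Hki.
apply/and3P; split.
- apply/allP => a; rewrite HM' inE => /orP [/eqP ->|Ha].
    by apply: (HS 1 [::]); rewrite mem_cat mem_head orbT.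
  by apply: (HS a [::]); rewrite mem_cat inE Ha !orbT.
- apply/allP => a; rewrite HM' => Ha; apply/allP => x _; rewrite HM'; exact: Hc.
- apply/allP => a; rewrite HM' => Ha; apply/allP => b; rewrite HM' => Hbb.
  apply/allP => v /words_size Sv; rewrite HM'; apply: HNM.
  apply: (Hk (a * b) _ k (leqnn k) v Sv).
  by apply/allpairsP; exists (a, b).
Qed.
Theorem proposition3p2 (G : groupType) (gens : seq G) (X : finType)
    (sigma : X -> G -> G * X) :
  generates gens -> biset_structure sigma ->
  (contracting sigma <-> exists l : nat, nucleus_alg gens sigma l <> None) /\
  (forall (l : nat) (N : seq G),
      nucleus_alg gens sigma l = Some N -> is_nucleus sigma N).
Proof.
move=> Hg Hb.
have Hfirst : forall l p s,
    [seq p <- candidates gens l | valid_cert gens sigma p.1 p.2] = p :: s ->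
    valid_cert gens sigma p.1 p.2.
  move=> l p s E; have : p \in p :: s by rewrite mem_head.
  by rewrite -E mem_filter => /andP [].
split; last first.
  move=> l N; rewrite /nucleus_alg.
  case E: [seq _ <- _ | _] => [|p s] // [<-].
  case: (cert_contracting Hg Hb (Hfirst _ _ _ E)) => Hc HM.
  exact: core_nucleus.
split.
  move=> Hcon; case: (contracting_cert Hg Hb Hcon) => l [M [k [Hin Hv]]].
  exists l; rewrite /nucleus_alg.
  case E: [seq _ <- _ | _] => [|p s] //.
  have : (M, k) \in [seq p <- candidates gens l | valid_cert gens sigma p.1 p.2].
    by rewrite mem_filter Hin andbT.
  by rewrite E.
case=> l; rewrite /nucleus_alg.
case E: [seq _ <- _ | _] => [|p s] // _.
case: (cert_contracting Hg Hb (Hfirst _ _ _ E)) => _ HM.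
by exists p.1.
Qed.
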